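(* For every instance $(A,C,k)$, there exists a committee satisfying EJR+ whose representation ratio is at least $\frac34-\frac{2}{\sqrt{k}}$ and whose utilitarian ratio is at least $\frac{2}{\sqrt{k}}-\frac1k$.
   Context: An instance $(A,C,k)$ consists of a finite nonempty candidate set $C$, voters $N=\{1,\dots,n\}$, approval sets $A_i\subseteq C$, and a committee size $1\le k\le|C|$. A committee is $W\subseteq C$ with $|W|\le k$. $\mathrm{sw}(W)=\sum_i|A_i\cap W|$ and $\mathrm{cov}(W)=|\{i:A_i\cap W\ne\emptyset\}|$; the utilitarian ratio is $\mathrm{sw}(W)/\max\{\mathrm{sw}(W'):|W'|=k\}$ and the representation ratio is $\mathrm{cov}(W)/\max\{\mathrm{cov}(W'):|W'|=k\}$. $W$ satisfies EJR+ if for every $\ell\in\{1,\dots,k\}$ and every $N'\subseteq N$ with $|N'|\ge\ell n/k$ and $\bigcap_{i\in N'}A_i\ne\emptyset$, either some $i\in N'$ has $|A_i\cap W|\ge\ell$ or $\bigcap_{i\in N'}A_i\subseteq W$. *)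

(* Defs.v *)
From mathcomp Require Import all_boot all_order all_algebra.
Set Implicit Arguments. Unset Strict Implicit. Unset Printing Implicit Defensive.
Import Order.TTheory GRing.Theory Num.Theory.

Section ABC.
Variables (C : finType) (n : nat) (A : 'I_n -> {set C}).

Definition sw (W : {set C}) : nat := \sum_(i < n) #|A i :&: W|.

Definition cov (W : {set C}) : nat := #|[set i : 'I_n | A i :&: W != set0]|.

Definition max_sw (k : nat) : nat := \max_(W : {set C} | #|W| == k) sw W.
Definition max_cov (k : nat) : nat := \max_(W : {set C} | #|W| == k) cov W.

Definition EJRplus (k : nat) (W : {set C}) : Prop :=
  forall (l : nat) (N' : {set 'I_n}),
    1 <= l <= k ->
    l * n <= #|N'| * k ->
    (\bigcap_(i in N') A i) != set0 ->
    (exists2 i, i \in N' & l <= #|A i :&: W|) \/ (\bigcap_(i in N') A i) \subset W.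
End ABC.

Definition ratio (R : numFieldType) (a b : nat) : R :=
  (if b == 0%N then 1 else a%:R / b%:R)%R.

Definition util_ratio (R : numFieldType) (C : finType) (n : nat)
  (A : 'I_n -> {set C}) (k : nat) (W : {set C}) : R := ratio R (sw A W) (max_sw A k).
Definition repr_ratio (R : numFieldType) (C : finType) (n : nat)
  (A : 'I_n -> {set C}) (k : nat) (W : {set C}) : R := ratio R (cov A W) (max_cov A k).

(* Main.v *)
Require Import Defs.
From mathcomp Require Import all_boot all_order all_algebra.
From mathcomp Require Import zify ring lra.
Import Order.TTheory GRing.Theory Num.Theory.
Set Implicit Arguments. Unset Strict Implicit. Unset Printing Implicit Defensive.

(* Proof: a "greedy justified candidate rule" with the top-t
   approval candidates preselected, a budget (payment) argument, and fills for
   utility / coverage. *)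

Section Basic.
Variables (C : finType) (n : nat) (A : 'I_n -> {set C}) (k : nat).

Definition sc (c : C) : nat := #|[set i | c \in A i]|.
Definition uu (i : 'I_n) (W : {set C}) : nat := #|A i :&: W|.
Definition grp (W : {set C}) (c : C) (l : nat) : {set 'I_n} :=
  [set i | (c \in A i) && (uu i W < l)].
Definition elig (W : {set C}) (c : C) (l : nat) : bool :=
  (c \notin W) && (l * n <= #|grp W c l| * k).
Definition done (W : {set C}) (l : nat) : Prop :=
  forall l' c, l < l' -> l' <= k -> ~~ elig W c l'.

Lemma uu_sum i (W : {set C}) : uu i W = \sum_(c in W) (c \in A i).
Proof.
rewrite /uu -sum1_card big_mkcond /= [RHS]big_mkcond /=.
apply: eq_bigr => c _; rewrite inE; by case: (c \in A i); case: (c \in W).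
Qed.

Lemma sw_sum (W : {set C}) : sw A W = \sum_(c in W) sc c.
Proof.
rewrite /sw (eq_bigr (fun i => \sum_(c in W) (c \in A i))); last by move=> i _; exact: uu_sum.
rewrite exchange_big /=; apply: eq_bigr => c _.
by rewrite /sc -sum1_card [RHS]big_mkcond /=; apply: eq_bigr => i _; rewrite inE.
Qed.

Lemma uu_mono i (W W' : {set C}) : W \subset W' -> uu i W <= uu i W'.
Proof. move=> h; apply: subset_leq_card; exact: setIS. Qed.

Lemma sw_mono (W W' : {set C}) : W \subset W' -> sw A W <= sw A W'.
Proof. move=> h; apply: leq_sum => i _; exact: uu_mono. Qed.

Lemma cov_mono (W W' : {set C}) : W \subset W' -> cov A W <= cov A W'.
Proof.
move=> h; apply: subset_leq_card; apply/subsetP => i; rewrite !inE.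
apply: contra => /eqP e; apply/eqP; apply/eqP; rewrite -subset0 -e; exact: setIS.
Qed.

Lemma grp_anti (W W' : {set C}) c l : W \subset W' -> grp W' c l \subset grp W c l.
Proof.
move=> h; apply/subsetP => i; rewrite !inE => /andP[-> hl] /=.
exact: leq_ltn_trans (uu_mono i h) hl.
Qed.

Lemma elig_anti (W W' : {set C}) c l : W \subset W' -> elig W' c l -> elig W c l.
Proof.
move=> h /andP[hc hl]; apply/andP; split.
  by apply: contra hc; apply: (subsetP h).
apply: leq_trans hl _; rewrite leq_mul2r subset_leq_card ?orbT //; exact: grp_anti.
Qed.

Lemma done_mono (W W' : {set C}) l : W \subset W' -> done W l -> done W' l.
Proof.
move=> h d l' c h1 h2; apply/negP => e; move: (d l' c h1 h2); by rewrite (elig_anti h e).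
Qed.

Lemma done0_EJR (W : {set C}) : 0 < n -> done W 0 -> EJRplus A k W.
Proof.
move=> n0 d l N' /andP[l1 lk] hsz hne.
case: (boolP (\bigcap_(i in N') A i \subset W)) => hsub; first by right.
left; move/subsetPn: hsub => [c hc hcW].
case: (boolP [exists i in N', l <= uu i W]) => [/exists_inP[i hi hl]|hno].
  by exists i.
have : elig W c l.
  rewrite /elig hcW /=; apply: leq_trans hsz _; rewrite leq_mul2r subset_leq_card ?orbT //.
  apply/subsetP => i hi; rewrite inE; apply/andP; split.
    by move/bigcapP: hc; apply.
  by rewrite ltnNge; apply: contra hno => h; apply/exists_inP; exists i.
by move/negP: (d l c l1 lk).
Qed.

Definition top (T : {set C}) : Prop :=
  forall c c', c \in T -> c' \notin T -> sc c' <= sc c.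

Definition Pt (t : nat) : bool :=
  (t <= k) && [exists T : {set C}, [&& #|T| == t,
     [forall c in T, forall c', (c' \notin T) ==> (sc c' <= sc c)] &
     [forall c in T, t * n <= sc c * k]]].

Lemma exists_T : exists T : {set C},
  [/\ #|T| <= k, top T, (forall c, c \in T -> #|T| * n <= sc c * k) &
      (#|T| < k -> forall c, c \notin T -> sc c * k < #|T|.+1 * n)].
Proof.
have ex0 : exists t, Pt t.
  exists 0; apply/andP; split => //; apply/existsP; exists set0.
  rewrite cards0 eqxx /=; apply/andP; split; apply/forall_inP => c; by rewrite inE.
have ub : forall t, Pt t -> t <= k by move=> t /andP[].
case: (ex_maxnP ex0 ub) => t /andP[tk /existsP[T /and3P[/eqP hT htop hsc]]] hmax.
exists T; split.
- by rewrite hT.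
- move=> c c' hc hc'; move/forall_inP: htop => /(_ c hc) /forallP /(_ c').
  by rewrite hc'.
- by move=> c hc; rewrite hT; move/forall_inP: hsc; apply.
move=> hlt c0 hc0; rewrite ltnNge; apply/negP => hbig.
have hin : c0 \in ~: T by rewrite inE.
case: (arg_maxnP sc hin) => c1 hc1 hmx.
have hc1' : c1 \notin T by rewrite -in_setC; exact: hc1.
have hmx' : forall j, j \notin T -> sc j <= sc c1.
  by move=> j hj; rewrite -in_setC in hj; exact: (hmx j hj).
have : Pt t.+1.
  apply/andP; split; first by rewrite -hT.
  apply/existsP; exists (c1 |: T); apply/and3P; split.
  - by rewrite cardsU1 hc1' hT.
  - apply/forall_inP => c; rewrite !inE => hc; apply/forallP => c'; apply/implyP.
    rewrite !inE negb_or => /andP[hne hc'T].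
    case/orP: hc => [/eqP ->|hc].
      exact: hmx'.
    by move/forall_inP: htop => /(_ c hc) /forallP /(_ c'); rewrite hc'T.
  - apply/forall_inP => c; rewrite !inE => hc.
    have h1 : t.+1 * n <= sc c1 * k.
      rewrite -hT; apply: leq_trans hbig _; rewrite leq_mul2r; apply/orP; right.
      exact: hmx'.
    case/orP: hc => [/eqP ->|hc] //.
    apply: leq_trans h1 _; rewrite leq_mul2r; apply/orP; right.
    by move/forall_inP: htop => /(_ c hc) /forallP /(_ c1); rewrite hc1'.
by move/hmax; rewrite ltnn.
Qed.

End Basic.

Section Run.
Variables (R : rcfType) (C : finType) (n : nat) (A : 'I_n -> {set C}) (k : nat) (T : {set C}).
Hypothesis n_gt0 : (0 < n)%N.
Local Open Scope ring_scope.

Lemma sumR_card (G : {set 'I_n}) : \sum_i ((i \in G)%:R : R) = #|G|%:R.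
Proof.
rewrite -sum1_card natr_sum [RHS]big_mkcond /=; apply: eq_bigr => i _.
by case: (i \in G).
Qed.

Lemma uu_U1 i c (W : {set C}) : c \notin W -> uu A i (c |: W) = ((c \in A i) + uu A i W)%N.
Proof. by move=> cW; rewrite !uu_sum big_setU1. Qed.

Definition Inv (W : {set C}) (l : nat) : Prop :=
  T \subset W /\ exists (pay : 'I_n -> R) (cnt m : 'I_n -> nat) (lev : C -> nat),
  (#|W|%:R = #|T|%:R + \sum_i pay i) /\
  (forall i, 0 <= pay i) /\
  (forall i, cnt i = 0%N -> pay i = 0) /\
  (forall i, (0 < cnt i)%N -> [/\ pay i * (m i)%:R * n%:R <= (cnt i)%:R * k%:R,
        (uu A i T + cnt i <= m i)%N, (l <= m i)%N & exists2 d, d \in W :\: T & m i = lev d]) /\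
  (forall i, (uu A i T + cnt i <= uu A i W)%N) /\
  (forall d, d \in W :\: T -> (1 <= lev d)%N /\ (lev d * n <= sc A d * k)%N).

Lemma Inv_start : Inv T k.
Proof.
split => //; exists (fun _ => 0), (fun _ => 0%N), (fun _ => 0%N), (fun _ => 0%N).
split; first by rewrite big1 ?addr0.
split => //; split => //; split => //; split; first by move=> i; rewrite addn0.
by move=> d; rewrite setDv inE.
Qed.

Lemma Inv_down W l l' : (l' <= l)%N -> Inv W l -> Inv W l'.
Proof.
move=> hl [TW [pay [cnt [m [lev [H1 [H2 [H3 [H4 [H5 H6]]]]]]]]]].
split => //; exists pay, cnt, m, lev; split => //; split => //; split => //; split; last by split.
move=> i /H4 [h1 h2 h3 h4]; split => //; exact: leq_trans hl h3.
Qed.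

Lemma Inv_step W l c : (0 < l)%N -> elig A k W c l -> Inv W l -> Inv (c |: W) l.
Proof.
move=> l0 /andP[cW hsz] [TW [pay [cnt [m [lev [H1 [H2 [H3 [H4 [H5 H6]]]]]]]]]].
set G := grp A W c l in hsz *.
have g0 : (0 < #|G|)%N.
  rewrite lt0n; apply/eqP => e; move: hsz; rewrite e mul0n leqn0 muln_eq0.
  by rewrite (gtn_eqF l0) (gtn_eqF n_gt0).
have gR : (0 : R) < #|G|%:R by rewrite ltr0n.
have cT : c \notin T by apply: contra cW; apply: (subsetP TW).
have hszR : (l%:R * n%:R : R) <= #|G|%:R * k%:R by rewrite -!natrM ler_nat.
split; first by apply: subset_trans TW (subsetUr _ _).
exists (fun i => pay i + (i \in G)%:R / #|G|%:R), (fun i => (cnt i + (i \in G))%N),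
  (fun i => if i \in G then l else m i), (fun d => if d == c then l else lev d).
split.
  rewrite cardsU1 cW big_split /= -mulr_suml sumR_card mulfV ?gt_eqF //.
  rewrite natrD H1 /=. ring.
split; first by move=> i; apply: addr_ge0 => //; apply: divr_ge0.
split.
  move=> i /eqP; rewrite addn_eq0 => /andP[/eqP h0]; rewrite eqb0 => hG.
  by rewrite (negbTE hG) mul0r addr0 H3.
split.
  move=> i; case hG: (i \in G) => /=; rewrite ?addn1 ?addn0 => hc.
  - have hi : (c \in A i) && (uu A i W < l)%N by move: hG; rewrite inE.
    case/andP: hi => hci hul.
    split => //.
    + have e1 : pay i * l%:R * n%:R <= (cnt i)%:R * k%:R.
        case: (posnP (cnt i)) => [/H3 ->|cp]; first by rewrite !mul0r mulr_ge0.
        case: (H4 i cp) => h1 _ h3 _; apply: le_trans h1.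
        rewrite -!mulrA ler_wpM2l //; apply: ler_wpM2r => //; by rewrite ler_nat.
      have e2 : 1 / #|G|%:R * l%:R * n%:R <= k%:R :> R.
        rewrite mul1r -mulrA mulrC ler_pdivrMr //; nra.
      rewrite mulrDl mulrDl -[(cnt i).+1]addn1 natrD mulrDl [1 * k%:R]mul1r.
      by apply: lerD.
    + by move: (H5 i) => h; rewrite addnS; apply: leq_ltn_trans h hul.
    + exists c; [by rewrite !inE eqxx andbT | by rewrite eqxx].
  - rewrite mul0r addr0; case: (H4 i hc) => h1 h2 h3 [d hd hmd]; split => //.
    exists d; first by move: hd; rewrite !inE => /andP[-> ->]; rewrite orbT.
    have dc : d != c by apply: contraNneq cW => <-; move: hd; rewrite inE => /andP[].
    by rewrite (negbTE dc).
split.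
  move=> i; rewrite uu_U1 //; case hG: (i \in G) => /=.
    have hci : c \in A i by move: hG; rewrite inE => /andP[].
    rewrite hci /=; move: (H5 i); lia.
  move: (H5 i); lia.
move=> d; rewrite !inE => /andP[dT /orP[/eqP dc|dW]].
  rewrite dc eqxx; split => //; apply: leq_trans hsz _; rewrite leq_mul2r; apply/orP; right.
  by apply: subset_leq_card; apply/subsetP => i; rewrite !inE => /andP[].
have dc : d != c by apply: contraNneq cW => <-.
by rewrite (negbTE dc); apply: H6; rewrite inE dT.
Qed.

Lemma run_exists N : forall (W : {set C}) l, (#|~: W| * k.+1 + l <= N)%N ->
  Inv W l -> done A k W l -> exists W0 : {set C}, [/\ W \subset W0, Inv W0 0 & done A k W0 0].
Proof.
elim: N => [|N IH] W l hN hI hd.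
  have l0 : l = 0%N by lia.
  by subst; exists W; split.
case: (posnP l) => [l0|lp]; first by subst; exists W; split.
case: (pickP (fun c => elig A k W c l)) => [c hc|hno].
  have hI' := Inv_step lp hc hI.
  have hd' : done A k (c |: W) l by apply: done_mono hd; exact: subsetUr.
  have cW : c \in ~: W by rewrite inE; case/andP: hc.
  have hcard : #|~: W| = (#|~: (c |: W)|).+1.
    rewrite (cardsD1 c (~: W)) cW add1n; congr _.+1; apply: eq_card => x.
    by rewrite !inE negb_or andbC.
  case: (IH (c |: W) l _ hI' hd') => [|W0 [h1 h2 h3]].
    move: hN; rewrite hcard mulSn; lia.
  by exists W0; split => //; apply: subset_trans h1; exact: subsetUr.
have hd' : done A k W l.-1.
  move=> l' c h1 h2; case: (ltngtP l' l) => [h|h|->].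
  - lia.
  - exact: hd.
  - by rewrite hno.
case: (IH W l.-1 _ (Inv_down (leq_pred l) hI) hd') => [|W0 h]; last by exists W0.
lia.
Qed.

Lemma final_exists : exists W0 : {set C}, [/\ T \subset W0, Inv W0 0 & done A k W0 0].
Proof.
apply: (@run_exists (#|~: T| * k.+1 + k) T k) => //; first exact: Inv_start.
move=> l' c h1 h2; lia.
Qed.

End Run.
Section RealCore.
Local Open Scope ring_scope.

Lemma real_core (R : rcfType) (k n s x P SM M q : R) :
  1 <= k -> 0 < n -> 0 <= s -> 0 <= x -> 0 < q -> q * q = k ->
  M <= P + x * s -> (k - x) * s <= P -> x * n <= SM * k ->
  x * n + s * k <= k * n -> (x = 0 \/ n < s * k) -> 0 <= M ->
  (2 / q - 1 / k) * M <= P + SM.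
Proof.
move=> k1 n0 s0 x0 q0 qk hM hP hSM hx hcase M0.
have k0 : 0 < k by lra.
have q1 : 1 <= q by nra.
have rhoE : 2 / q - 1 / k = (2 * q - 1) / k.
  rewrite -qk; field; by rewrite gt_eqF.
have rho0 : 0 <= (2 * q - 1) / k.
  by apply: divr_ge0; [lra | exact: ltW].
rewrite rhoE.
apply: le_trans (_ : (2 * q - 1) / k * (P + x * s) <= _); first exact: ler_wpM2l.
rewrite mulrAC ler_pdivrMr //.
have key : (2 * q - 1) * k * s <= (k - x) * s * k + x * n.
  case: hcase => [->|hns].
    rewrite !mul0r subr0 addr0.
    have : 2 * q - 1 <= k by rewrite -qk; nra.
    move=> h; have ks : 0 <= k * s by apply: mulr_ge0 => //; lra.
    nra.
  have hsq : 0 <= (n - q * s) * (n - q * s) by rewrite -expr2 sqr_ge0.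
  have h1 : x * (s * k - n) * n <= (k * n - s * k) * (s * k - n) by nra.
  have : n * ((2 * q - 1) * k * s) <= n * ((k - x) * s * k + x * n) by nra.
  by rewrite ler_pM2l.
have hP2 : (k - 2 * q + 1) * ((k - x) * s) <= (k - 2 * q + 1) * P.
  apply: ler_wpM2l => //; rewrite -qk; nra.
nra.
Qed.

Lemma real_rep (R : rcfType) (k n c0 X S M m r qq q : R) :
  0 < q -> q * q = k -> 0 < n -> 0 <= c0 -> 0 <= X -> 0 <= m -> 0 <= r -> 0 <= qq ->
  m + r + qq = k -> r <= 2 * q -> m * n <= c0 * k -> c0 + X <= n ->
  qq * X <= k * S -> M <= c0 + X -> 0 <= M ->
  (3 / 4 - 2 / q) * M <= c0 + S.
Proof.
move=> q0 qk n0 c00 X0 m0 r0 qq0 hsum hr hm hcX hS hM M0.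
have k0 : 0 < k by rewrite -qk mulr_gt0.
have S0 : 0 <= S.
  have : 0 <= k * S by apply: le_trans hS; exact: mulr_ge0.
  by rewrite pmulr_rge0.
case: (lerP (3 / 4 - 2 / q) 0) => hb.
  apply: le_trans (_ : 0 <= _); last exact: addr_ge0.
  by rewrite mulr_le0_ge0.
set b := 3 / 4 - 2 / q in hb *.
have bkE : k * b = 3 / 4 * k - 2 * q.
  by rewrite /b mulrBr -qk; field; rewrite gt_eqF.
have bk34 : k * b <= k by rewrite bkE; nra.
have qqE : qq = k - m - r by rewrite -hsum; ring.
have hT : k * (b * (c0 + X)) <= k * c0 + qq * X.
  rewrite mulrA bkE.
  case: (lerP (3 / 4 * k - 2 * q) qq) => hq.
    have e1 : 0 <= (qq - (3 / 4 * k - 2 * q)) * X by apply: mulr_ge0 => //; lra.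
    have e2 : 0 <= (k - (3 / 4 * k - 2 * q)) * c0 by apply: mulr_ge0 => //; rewrite -bkE; lra.
    lra.
  have e1 : 0 <= k * (((3 / 4 * k - 2 * q) - qq) * (n - c0 - X)).
    by apply: mulr_ge0; [lra | apply: mulr_ge0; lra].
  have e2 : 0 <= (k - qq) * (c0 * k - m * n) by apply: mulr_ge0; lra.
  have e3 : 0 <= n * ((m - k / 2) * (m - k / 2) + r * m + k * (2 * q - r)).
    apply: mulr_ge0; first lra.
    apply: addr_ge0; first apply: addr_ge0.
    - by rewrite -expr2 sqr_ge0.
    - exact: mulr_ge0.
    - apply: mulr_ge0; lra.
  rewrite qqE in e1 e2 *.
  have hk2 : k * b * (c0 + X) <= k * c0 + (k - m - r) * X.
    rewrite bkE. nra.
  by rewrite bkE in hk2.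
apply: le_trans (_ : b * (c0 + X) <= _); first by apply: ler_wpM2l => //; exact: ltW.
rewrite -(@ler_pM2l _ k) //; apply: le_trans hT _.
by rewrite mulrDr lerD2l.
Qed.


End RealCore.

Section Budget.
Variables (R : rcfType) (C : finType) (n : nat) (A : 'I_n -> {set C}) (k : nat) (T : {set C}).
Hypothesis n_gt0 : (0 < n)%N.
Hypothesis hTk : (#|T| <= k)%N.
Hypothesis htop : top A T.
Hypothesis hT3 : forall c, c \in T -> (#|T| * n <= sc A c * k)%N.
Hypothesis hT4 : (#|T| < k)%N -> forall c, c \notin T -> (sc A c * k < #|T|.+1 * n)%N.
Local Open Scope ring_scope.

Lemma invR_le (a b c d : nat) : (0 < a * b)%N -> (a * b <= c * d)%N ->
  (c%:R : R)^-1 <= d%:R / (a%:R * b%:R).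
Proof.
move=> h0 h1.
have c0 : (0 < c)%N by move: h1; case: c h0 => //; rewrite mul0n; lia.
have ab0 : (0 : R) < a%:R * b%:R by rewrite -natrM ltr0n.
rewrite ler_pdivlMr // mulrC ler_pdivrMr ?ltr0n // -!natrM ler_nat.
by rewrite [(d * c)%N]mulnC.
Qed.

Definition Tpay (i : 'I_n) : R := \sum_(j in A i :&: T) (sc A j)%:R^-1.

Lemma Tpay_ge0 i : 0 <= Tpay i.
Proof. by apply: sumr_ge0 => j _; rewrite invr_ge0 ler0n. Qed.

Lemma sum_Tpay : \sum_i Tpay i = #|T|%:R.
Proof.
rewrite /Tpay.
rewrite (eq_bigr (fun i => \sum_(j in T) ((j \in A i)%:R * (sc A j)%:R^-1))); last first.
  move=> i _; rewrite [RHS]big_mkcond [LHS]big_mkcond /=; apply: eq_bigr => j _.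
  by rewrite inE; case: (j \in A i); case: (j \in T); rewrite ?mul1r ?mul0r.
rewrite exchange_big /= -sumr_const; apply: eq_bigr => j hj.
rewrite -big_distrl /=.
have -> : \sum_i ((j \in A i)%:R : R) = (sc A j)%:R.
  rewrite /sc -sum1_card natr_sum [RHS]big_mkcond /=; apply: eq_bigr => i _.
  by rewrite inE; case: (j \in A i).
have sj : (0 < sc A j)%N.
  have := hT3 hj; have : (0 < #|T|)%N by apply/card_gt0P; exists j.
  case: (sc A j) => //; rewrite mul0n; lia.
by rewrite mulfV // pnatr_eq0 -lt0n.
Qed.

Lemma Tpay_le i (b : R) : (forall j, j \in T -> (sc A j)%:R^-1 <= b) ->
  Tpay i <= (uu A i T)%:R * b.
Proof.
move=> hb; rewrite /Tpay /uu mulr_natl -sumr_const; apply: ler_sum => j.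
by rewrite inE => /andP[_]; apply: hb.
Qed.

Section W0.
Variable W0 : {set C}.
Hypothesis hInv : Inv R A k T W0 0.

Lemma budget : exists pay : 'I_n -> R,
  [/\ #|W0|%:R = \sum_i (Tpay i + pay i),
      (forall i, 0 <= pay i),
      (forall i, Tpay i + pay i <= k%:R / n%:R),
      (forall i, uu A i W0 = 0%N -> Tpay i + pay i = 0) &
      ((forall d, d \in W0 :\: T -> (sc A d * k < #|T|.+1 * n)%N) ->
        forall i, pay i <= k%:R / n%:R - (uu A i T)%:R * (k%:R / (#|T|%:R * n%:R)))].
Proof.
case: hInv => TW [pay [cnt [m [lev [H1 [H2 [H3 [H4 [H5 H6]]]]]]]]].
have nR : (0 : R) < n%:R by rewrite ltr0n.
have aT i : (uu A i T <= #|T|)%N by apply: subset_leq_card; exact: subsetIr.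
have hTb i : Tpay i <= (uu A i T)%:R * (k%:R / (#|T|%:R * n%:R)).
  apply: Tpay_le => j hj; apply: invR_le; last exact: hT3.
  rewrite muln_gt0 n_gt0 andbT; apply/card_gt0P; by exists j.
have hTb2 i : (uu A i T)%:R * (k%:R / (#|T|%:R * n%:R)) <= k%:R / n%:R :> R.
  case: (posnP #|T|) => [T0|Tp].
    have : (uu A i T = 0)%N by move: (aT i); rewrite T0; lia.
    by move=> ->; rewrite mul0r divr_ge0 ?ler0n.
  rewrite invfM mulrA mulrA ler_wpM2r ?invr_ge0 ?ler0n // ler_pdivrMr ?ltr0n //.
  by rewrite mulrC ler_wpM2l ?ler0n // ler_nat.
have hcnt i : (0 < cnt i)%N -> exists mm : nat, [/\ (1 <= mm)%N, (uu A i T + cnt i <= mm)%N,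
    pay i <= (cnt i)%:R * (k%:R / (mm%:R * n%:R)),
    Tpay i <= (uu A i T)%:R * (k%:R / (mm%:R * n%:R)) &
    exists2 d, d \in W0 :\: T & mm = lev d].
  move=> cp; case: (H4 i cp) => h1 h2 _ [d hd hmd]; exists (m i).
  have [l1 l2] := H6 d hd.
  have m1 : (1 <= m i)%N by rewrite hmd.
  have mnR : (0 : R) < (m i)%:R * n%:R by rewrite -natrM ltr0n muln_gt0 m1.
  split => //.
  - by rewrite mulrA ler_pdivlMr // mulrA.
  - apply: Tpay_le => j hj; apply: invR_le; first by rewrite muln_gt0 m1.
    rewrite hmd; apply: leq_trans l2 _; rewrite leq_mul2r; apply/orP; right.
    apply: htop => //; by move: hd; rewrite inE => /andP[].
  - by exists d.
exists pay; split => //.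
- by rewrite big_split /= sum_Tpay H1.
- move=> i; case: (posnP (cnt i)) => [c0|cp].
    by rewrite (H3 i c0) addr0; apply: le_trans (hTb i) (hTb2 i).
  case: (hcnt i cp) => mm [m1 ha hp hq _].
  apply: le_trans (lerD hq hp) _; rewrite -mulrDl -natrD.
  have mR : (0 : R) < mm%:R by rewrite ltr0n.
  apply: le_trans (_ : mm%:R * (k%:R / (mm%:R * n%:R)) <= _).
    by apply: ler_wpM2r; [rewrite divr_ge0 ?mulr_ge0 ?ler0n | rewrite ler_nat].
  have -> : mm%:R * (k%:R / (mm%:R * n%:R)) = k%:R / n%:R :> R.
    by field; rewrite !gt_eqF.
  done.
- move=> i hu.
  have ha : (uu A i T = 0)%N.
    by move: (uu_mono A i TW); rewrite hu; lia.
  have hc : (cnt i = 0)%N by move: (H5 i); rewrite hu; lia.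
  rewrite (H3 i hc) addr0; apply/eqP; rewrite eq_le Tpay_ge0 andbT.
  by apply: le_trans (hTb i) _; rewrite ha mul0r.
- move=> hsmall i.
  case: (posnP (cnt i)) => [c0|cp].
    by rewrite (H3 i c0) subr_ge0; exact: hTb2.
  case: (hcnt i cp) => mm [m1 ha hp _ [d hd hmd]].
  have hmT : (mm <= #|T|)%N.
    have [l1 l2] := H6 d hd; rewrite -hmd in l2; have h3 := hsmall d hd.
    have : (mm * n < #|T|.+1 * n)%N by apply: leq_ltn_trans l2 h3.
    by rewrite ltn_mul2r n_gt0 /= ltnS.
  have mR : (0 : R) < mm%:R by rewrite ltr0n.
  have TR : (0 : R) < #|T|%:R by rewrite ltr0n; lia.
  apply: le_trans hp _.
  have e1 : (cnt i)%:R <= mm%:R - (uu A i T)%:R :> R.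
    by rewrite lerBrDr -natrD ler_nat addnC.
  apply: le_trans (_ : (mm%:R - (uu A i T)%:R) * (k%:R / (mm%:R * n%:R)) <= _).
    by apply: ler_wpM2r; [rewrite divr_ge0 ?mulr_ge0 ?ler0n | ].
  have -> : (mm%:R - (uu A i T)%:R) * (k%:R / (mm%:R * n%:R)) =
      k%:R / n%:R - (uu A i T)%:R * (k%:R / (mm%:R * n%:R)) :> R.
    by field; rewrite !gt_eqF.
  apply: lerB; first exact: lexx. apply: ler_wpM2l; first exact: ler0n.
  apply: ler_wpM2l; first exact: ler0n.
  rewrite lef_pV2 ?posrE ?mulr_gt0 //.
  by apply: ler_wpM2r; [exact: ler0n | rewrite ler_nat].
Qed.

Lemma W0_size : (#|W0| <= k)%N.
Proof.
case: budget => pay [H1 H2 H3 H4 H5].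
have : (#|W0|%:R : R) <= k%:R.
  rewrite H1; apply: le_trans (ler_sum _ (fun i _ => H3 i)) _.
  rewrite sumr_const card_ord -[_ *+ n]mulr_natr -mulrA mulVf ?mulr1 //.
  by rewrite pnatr_eq0 -lt0n.
by rewrite ler_nat.
Qed.

Lemma W0_cov : (#|W0| * n <= cov A W0 * k)%N.
Proof.
case: budget => pay [H1 H2 H3 H4 H5].
set S := [set i | A i :&: W0 != set0].
have : (#|W0|%:R : R) <= #|S|%:R * (k%:R / n%:R).
  rewrite H1 (bigID (fun i => i \in S)) /=.
  rewrite [X in _ + X]big1 ?addr0; last first.
    move=> i; rewrite inE negbK => /eqP h; apply: H4.
    by rewrite /uu h cards0.
  rewrite mulr_natl -sumr_const; apply: ler_sum => i _; exact: H3.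
have nR : (0 : R) < n%:R by rewrite ltr0n.
rewrite mulrA ler_pdivlMr // -!natrM ler_nat => h.
by rewrite /cov -/S.
Qed.

Lemma sc_le_n c : (sc A c <= n)%N.
Proof. by rewrite /sc; apply: leq_trans (max_card _) _; rewrite card_ord. Qed.

Lemma sum_uuT : \sum_i ((uu A i T)%:R : R) = (\sum_(j in T) sc A j)%:R.
Proof. by rewrite -natr_sum -sw_sum. Qed.

Lemma smalls_bound (cs : C) : cs \notin W0 ->
  (#|[set d in W0 :\: T | (sc A d < sc A cs)%N]| * n + sc A cs * k <= k * n)%N.
Proof.
move=> csW.
have TW : T \subset W0 by case: hInv.
set s := sc A cs; set G := W0 :\: T; set X := [set d in G | (sc A d < s)%N].
have hG : (#|G| + #|T| = #|W0|)%N.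
  rewrite /G cardsD (setIidPr TW) subnK //; exact: subset_leq_card.
have hXG : (#|X| <= #|G|)%N by apply: subset_leq_card; apply/subsetP => d; rewrite inE => /andP[].
have hsz := W0_size.
have sn := sc_le_n cs.
have csT : cs \notin T by apply: contra csW; apply: (subsetP TW).
have hXn : (#|X| * n <= #|G| * n)%N by rewrite leq_mul2r hXG orbT.
have hGn : (#|G| * n + #|T| * n <= k * n)%N by rewrite -mulnDl leq_mul2r hG hsz orbT.
case: (leqP (s * k) (#|T| * n)) => hA; first by lia.
case: (ltngtP #|T| k) => hTk'; last first.
- have G0 : #|G| = 0%N by lia.
  have X0 : #|X| = 0%N by lia.
  by rewrite X0 mul0n add0n mulnC leq_mul2l sn orbT.
- lia.
have h4 := hT4 hTk' csT.
case: (boolP [exists d in G, (s <= sc A d)%N]) => [/exists_inP[d dG hd]|hno].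
  have : (#|X| < #|G|)%N.
    apply: proper_card; apply/properP; split; first by apply/subsetP => e; rewrite inE => /andP[].
    by exists d => //; rewrite inE dG /= -leqNgt.
  move=> hlt.
  have : (#|X| * n + n <= #|G| * n)%N by rewrite addnC -mulSn leq_mul2r hlt orbT.
  rewrite mulSn in h4; lia.
have allsmall : forall d, d \in G -> (sc A d < s)%N.
  move=> d dG; rewrite ltnNge; apply: contra hno => h; apply/exists_inP; by exists d.
have XG : X = G.
  apply/setP => d; rewrite inE; case dG: (d \in G) => //=; exact: allsmall.
have k0 : (0 < k)%N by lia.
case: hInv => _ [pay0 [cnt0 [m0 [lev [_ [_ [_ [_ [_ H6]]]]]]]]].
case: (posnP #|T|) => [T0|Tp].
  have G0 : #|G| = 0%N.
    apply/eqP; rewrite cards_eq0; apply/eqP/setP => d; rewrite in_set0.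
    apply/negbTE/negP => dG; have [l1 l2] := H6 d dG; have := allsmall d dG.
    move: h4; rewrite T0 => h4 hd.
    have : (sc A d * k < s * k)%N by rewrite ltn_mul2r k0.
    nia.
  rewrite XG G0 mul0n add0n; rewrite T0 in h4; nia.
case: budget => pay [H1 H2 H3 H4 H5].
have hsm : forall d, d \in W0 :\: T -> (sc A d * k < #|T|.+1 * n)%N.
  move=> d dG; apply: leq_ltn_trans h4; apply: ltnW; rewrite ltn_mul2r k0; exact: allsmall.
have TR : (0 : R) < #|T|%:R by rewrite ltr0n.
have nR : (0 : R) < n%:R by rewrite ltr0n.
have hsum : (\sum_(j in T) sc A j >= #|T| * s)%N.
  rewrite -sum_nat_const; apply: leq_sum => j hj; exact: htop.
have : (#|W0|%:R : R) <= #|T|%:R + k%:R - (#|T| * s)%:R * (k%:R / (#|T|%:R * n%:R)).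
  rewrite H1 big_split /= sum_Tpay -addrA lerD2l.
  apply: le_trans (ler_sum _ (fun i _ => H5 hsm i)) _.
  rewrite sumrB sumr_const card_ord -[_ *+ n]mulr_natr -mulrA mulVf ?mulr1 ?gt_eqF //.
  rewrite -mulr_suml sum_uuT; apply: lerB; first exact: lexx.
  by apply: ler_wpM2r; [rewrite divr_ge0 ?mulr_ge0 ?ler0n | rewrite ler_nat].
have -> : (#|T| * s)%:R * (k%:R / (#|T|%:R * n%:R)) = (s * k)%:R / n%:R :> R.
  by rewrite !natrM; field; rewrite !gt_eqF.
move=> h.
have := ler_wpM2r (ler0n R n) h.
rewrite mulrBl mulrDl -mulrA mulVf ?mulr1 ?gt_eqF // lerBrDr -!natrM -!natrD ler_nat.
rewrite -hG XG; nia.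
Qed.

Lemma util_main (W : {set C}) : W0 \subset W -> #|W| = k ->
  (forall d c, d \in W :\: W0 -> c \notin W -> (sc A c <= sc A d)%N) -> (1 <= k)%N ->
  (2%:R / Num.sqrt k%:R - 1 / k%:R) * (max_sw A k)%:R <= (sw A W)%:R :> R.
Proof.
move=> W0W hWk hfill k1.
set q := Num.sqrt (k%:R : R).
have kR : (1 : R) <= k%:R by rewrite ler1n.
have q0 : 0 < q by rewrite sqrtr_gt0; lra.
have qk : q * q = k%:R by rewrite -expr2 sqr_sqrtr //; lra.
have k0R : (0 : R) < k%:R by lra.
have rhoE : 2%:R / q - 1 / k%:R = (2 * q - 1) / k%:R.
  by rewrite -qk; field; rewrite gt_eqF.
have rho1 : 2%:R / q - 1 / k%:R <= 1 :> R.
  by rewrite rhoE ler_pdivrMr // mul1r; nra.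
have TW0 : T \subset W0 by case: hInv.
case: (pickP (fun c => c \notin W)) => [c0 hc0|hno]; last first.
  have hM : (max_sw A k <= sw A W)%N.
    apply/bigmax_leqP => W' _; apply: sw_mono; apply/subsetP => c _.
    by move: (hno c) => /= /negbFE.
  apply: le_trans (_ : 1 * (max_sw A k)%:R <= _).
    by apply: ler_wpM2r; [exact: ler0n | exact: rho1].
  by rewrite mul1r ler_nat.
case: (arg_maxnP (sc A) (hc0 : (fun c => c \notin W) c0)) => cs csW csmax.
set s := sc A cs.
have csT : cs \notin T.
  by apply: contra csW => csT; apply: (subsetP W0W); apply: (subsetP TW0).
have csW0 : cs \notin W0 by apply: contra csW; apply: (subsetP W0W).
set B := [set d in W | (s <= sc A d)%N].
have small_in d : d \in W :\: B -> d \in W0 :\: T /\ (sc A d < s)%N.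
  rewrite !inE negb_and -ltnNge => /andP[/orP[/negP//|hlt] dW].
  have dW0 : d \in W0.
    apply: contraT => dW0; have := hfill d cs; rewrite inE dW0 dW => /(_ isT csW).
    by rewrite leqNgt hlt.
  have dT : d \notin T by apply/negP => dT; have := htop dT csT; rewrite leqNgt hlt.
  by rewrite dT dW0.
case: hInv => _ [pay0 [cnt0 [m0 [lev [_ [_ [_ [_ [_ H6]]]]]]]]].
have small_n d : d \in W :\: B -> (n <= sc A d * k)%N.
  move=> hd; have [dG _] := small_in d hd; have [l1 l2] := H6 d dG.
  by apply: leq_trans l2; rewrite -{1}[n]mul1n leq_mul2r l1 orbT.
set x := #|W :\: B|.
have hx : (x * n + s * k <= k * n)%N.
  apply: leq_trans (smalls_bound csW0); rewrite leq_add2r leq_mul2r; apply/orP; right.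
  apply: subset_leq_card; apply/subsetP => e he; have [h1 h2] := small_in e he.
  by rewrite inE h1 h2.
have BW : B \subset W by apply/subsetP => e; rewrite inE => /andP[].
have hBx : (#|B| + x = k)%N by rewrite -hWk -(cardsID B W) (setIidPr BW).
have hsm : (x * n <= (\sum_(d in W :\: B) sc A d) * k)%N.
  rewrite -sum_nat_const big_distrl /=; apply: leq_sum => e he; exact: small_n.
have hcase : x = 0%N \/ (n < s * k)%N.
  case: (posnP x) => [->|xp]; [by left | right].
  move/card_gt0P: xp => [e he]; apply: leq_ltn_trans (small_n e he) _.
  by rewrite ltn_mul2r k1; case: (small_in e he).
have hP : (#|B| * s <= \sum_(d in B) sc A d)%N.
  rewrite -sum_nat_const; apply: leq_sum => e; by rewrite inE => /andP[].
have hM : (max_sw A k <= \sum_(d in B) sc A d + x * s)%N.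
  apply/bigmax_leqP => W' /eqP hW'.
  rewrite sw_sum (big_setID B) /=.
  have e1 : (\sum_(c in W' :\: B) sc A c <= #|W' :\: B| * s)%N.
    rewrite -sum_nat_const; apply: leq_sum => c; rewrite !inE => /andP[cB _].
    case cW: (c \in W).
      by move: cB; rewrite cW /= -ltnNge => /ltnW.
    by apply: csmax; rewrite /= cW.
  have e2 : (\sum_(c in B) sc A c = \sum_(c in B :&: W') sc A c + \sum_(c in B :\: W') sc A c)%N.
    by rewrite (big_setID W').
  have e3 : (#|B :\: W'| * s <= \sum_(c in B :\: W') sc A c)%N.
    rewrite -sum_nat_const; apply: leq_sum => c; by rewrite !inE => /andP[_ /andP[]].
  have c1 := cardsID W' B; have c2 := cardsID B W'.
  rewrite hW' in c2; rewrite setIC in c1.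
  rewrite e2; move: e1 e3 hBx c1 c2.
  set a1 := #|W' :&: B|; set a2 := #|W' :\: B|; set a3 := #|B :\: W'|.
  set S1 := (\sum_(c in W' :&: B) sc A c)%N; set S2 := (\sum_(c in W' :\: B) sc A c)%N.
  set S3 := (\sum_(c in B :\: W') sc A c)%N.
  rewrite (_ : (\sum_(c in B :&: W') sc A c)%N = S1); last by rewrite setIC.
  move=> e1 e3 hb c1 c2; nia.
have hsw : sw A W = (\sum_(d in B) sc A d + \sum_(d in W :\: B) sc A d)%N.
  by rewrite sw_sum (big_setID B) /= (setIidPr BW).
rewrite hsw natrD.
apply: (@real_core R k%:R n%:R s%:R x%:R _ _ _ q) => //.
- by rewrite ltr0n.
- by rewrite -natrM -natrD ler_nat.
- rewrite -hBx natrD addrK -natrM ler_nat; exact: hP.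
- by rewrite -!natrM ler_nat.
- by rewrite -!natrM -natrD ler_nat.
- case: hcase => [->|h]; [by left | right]; by rewrite -natrM ltr_nat.
Qed.


End W0.
End Budget.

Section Avg.
Variable (C : finType).

Lemma avg_subset (f : C -> nat) K : forall (X : {set C}), #|X| = K -> forall r, (r <= K)%N ->
  exists Y : {set C}, [/\ Y \subset X, #|Y| = r & (r * \sum_(c in X) f c <= K * \sum_(c in Y) f c)%N].
Proof.
elim: K => [|K IH] X hX r hr.
  have -> : r = 0%N by lia.
  by exists set0; rewrite sub0set cards0 mul0n.
case: (ltngtP r K.+1) => [hlt|hgt|->]; last first.
- by exists X; rewrite subxx hX.
- lia.
have : (0 < #|X|)%N by rewrite hX.
case/card_gt0P => x0 hx0.
case: (arg_minnP f hx0) => m hm0 hmin.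
have hm : m \in X := hm0.
have hX' : #|X :\ m| = K by move: hX; rewrite (cardsD1 m) hm add1n => -[].
have [Y [hY1 hY2 hY3]] := IH (X :\ m) hX' r (hlt : (r <= K)%N).
exists Y; split => //.
  by apply: subset_trans hY1 _; apply: subsetDl.
rewrite (big_setD1 m hm) /=.
set S' := (\sum_(c in X :\ m) f c)%N; set SY := (\sum_(c in Y) f c)%N.
have h2 : (K * f m <= S')%N.
  rewrite -hX' -sum_nat_const; apply: leq_sum => c hc; apply: hmin.
  by move: hc; rewrite inE => /andP[].
case: (posnP K) => [K0|Kp].
  have -> : r = 0%N by lia.
  by rewrite !mul0n.
have : (K * (r * (f m + S')) <= K * (K.+1 * SY))%N by nia.
by rewrite leq_pmul2l.
Qed.

Lemma exists_subset_card (X : {set C}) r : (r <= #|X|)%N ->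
  exists Y : {set C}, Y \subset X /\ #|Y| = r.
Proof.
move=> hr; have [Y [h1 h2 _]] := @avg_subset (fun _ => 0%N) #|X| X erefl r hr.
by exists Y.
Qed.

End Avg.

Section Sets.
Variables (C : finType) (n : nat) (A : 'I_n -> {set C}) (k : nat).
Hypothesis k_leC : (k <= #|C|)%N.

Lemma exists_k_set r : (r <= #|C|)%N -> 0 < #|[pred U : {set C} | #|U| == r]|.
Proof.
move=> hr; have rC : (r <= #|[set: C]|)%N by rewrite cardsT.
have [U [_ hU]] := exists_subset_card rC.
by apply/card_gt0P; exists U; rewrite inE hU.
Qed.

Lemma opt_sw : exists2 W' : {set C}, #|W'| = k & max_sw A k = sw A W'.
Proof.
have [W' h1 h2] := eq_bigmax_cond (sw A) (exists_k_set k_leC).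
by exists W' => //; apply/eqP.
Qed.

Lemma opt_cov : exists2 W' : {set C}, #|W'| = k & max_cov A k = cov A W'.
Proof.
have [W' h1 h2] := eq_bigmax_cond (cov A) (exists_k_set k_leC).
by exists W' => //; apply/eqP.
Qed.

Lemma top_r r : (r <= k)%N -> exists U : {set C}, #|U| = r /\ (r * max_sw A k <= k * sw A U)%N.
Proof.
move=> rk.
have rC : (r <= #|[set: C]|)%N by rewrite cardsT; lia.
have [U0 [_ hU0]] := exists_subset_card rC.
have hU0' : #|U0| == r by rewrite hU0.
case: (@arg_maxnP _ U0 (fun U : {set C} => #|U| == r) (sw A) hU0') => U /eqP hU hmax.
exists U; split => //.
have [W' hW' ->] := opt_sw.
have [Y [hY1 hY2 hY3]] := avg_subset (sc A) hW' rk.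
rewrite !sw_sum; apply: leq_trans hY3 _; rewrite leq_mul2l; apply/orP; right.
rewrite -!sw_sum; apply: hmax; by rewrite /= hY2.
Qed.

Lemma fill_exists (W0 : {set C}) : (#|W0| <= k)%N -> exists W : {set C},
  [/\ W0 \subset W, #|W| = k & forall d c, d \in W :\: W0 -> c \notin W -> (sc A c <= sc A d)%N].
Proof.
move=> hW0.
have [Y [hY1 hY2]] : exists Y : {set C}, Y \subset ~: W0 /\ #|Y| = (k - #|W0|)%N.
  by apply: exists_subset_card; rewrite cardsCs; lia.
set Z0 := W0 :|: Y.
have hZ0 : (W0 \subset Z0) && (#|Z0| == k).
  rewrite subsetUl /= /Z0 cardsU.
  have -> : W0 :&: Y = set0.
    apply/setP => c; rewrite !inE; apply/negbTE; apply/negP => /andP[h1 h2].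
    by move: (subsetP hY1 c h2); rewrite inE h1.
  by rewrite cards0 subn0 hY2; apply/eqP; lia.
case: (@arg_maxnP _ Z0 (fun Z : {set C} => (W0 \subset Z) && (#|Z| == k)) (sw A) hZ0) => W /andP[hW1 /eqP hW2] hmax.
exists W; split => // d c hd hc; rewrite leqNgt; apply/negP => hlt.
move: hd; rewrite inE => /andP[dW0 dW].
set Z := c |: (W :\ d).
have cZ : c \notin W :\ d by rewrite inE negb_and hc orbT.
have hZ : (W0 \subset Z) && (#|Z| == k).
  apply/andP; split.
    apply/subsetP => e he; rewrite !inE; apply/orP; right; apply/andP; split.
      by apply: contraNneq dW0 => <-.
    exact: (subsetP hW1).
  by rewrite cardsU1 cZ add1n -hW2 (cardsD1 d W) dW.
have := hmax Z hZ; rewrite /= !sw_sum (big_setD1 d dW) /= big_setU1 //=.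
lia.
Qed.

Lemma cov_sum (W : {set C}) : cov A W = (\sum_i ((A i :&: W != set0) : nat))%N.
Proof.
by rewrite /cov -sum1_card big_mkcond /=; apply: eq_bigr => i _; rewrite inE; case: (_ != _).
Qed.

Lemma sum_eq1 (Y : {set C}) c0 : (\sum_(c in Y) ((c0 == c) : nat))%N = (c0 \in Y).
Proof.
case: (boolP (c0 \in Y)) => h.
  rewrite (bigD1 c0) //= eqxx big1 // => c /andP[_ hc]; by rewrite eq_sym (negbTE hc).
by rewrite big1 // => c hc; apply/eqP; rewrite eqb0; apply: contraNneq h => ->.
Qed.

Lemma cov_fill (W0 : {set C}) : exists (Wc : {set C}) (f : C -> nat),
  [/\ #|Wc| = k, (max_cov A k <= cov A W0 + \sum_(c in Wc) f c)%N,
      (cov A W0 + \sum_(c in Wc) f c <= n)%N &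
      forall Y : {set C}, Y \subset Wc -> (cov A W0 + \sum_(c in Y) f c <= cov A (W0 :|: Y))%N].
Proof.
have [Wc hWc hmax] := opt_cov.
set pk := fun i => [pick c in A i :&: Wc].
set f := fun c => (\sum_i ((A i :&: W0 == set0) && (pk i == Some c)) : nat)%N.
have hsum (Y : {set C}) : (\sum_(c in Y) f c =
   \sum_i ((A i :&: W0 == set0) * (if pk i is Some c0 then (c0 \in Y) else false)))%N.
  rewrite /f exchange_big /=; apply: eq_bigr => i _.
  case: (pk i) => [c0|].
    rewrite -sum_eq1 big_distrr /=; apply: eq_bigr => c _.
    by case: (A i :&: W0 == set0); rewrite ?mul1n ?mul0n.
  by rewrite muln0 big1 // => c _ /=; rewrite andbF.
have pkP i : if pk i is Some c0 then c0 \in A i :&: Wc else A i :&: Wc == set0.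
  rewrite /pk; case: pickP => [c0 //|h]; apply/eqP/setP => c; rewrite in_set0; exact: h.
exists Wc, f; split => //.
- rewrite hmax !cov_sum hsum -big_split /=; apply: leq_sum => i _.
  have := pkP i; case: (pk i) => [c0 hc0|h0].
    have -> : A i :&: Wc != set0 by apply/set0Pn; exists c0.
    case: (A i :&: W0 =P set0) => //= _.
    by move: hc0; rewrite inE => /andP[_ ->].
  by rewrite h0.
- rewrite cov_sum hsum -big_split /=.
  apply: (@leq_trans (\sum_(i < n) 1)%N); last by rewrite sum1_card card_ord.
  apply: leq_sum => i _.
  case: (A i :&: W0 =P set0) => //= _; case: (pk i) => //= c0; by case: (c0 \in Wc).
- move=> Y hY; rewrite !cov_sum hsum -big_split /=; apply: leq_sum => i _.
  have := pkP i; case: (pk i) => [c0 hc0|_].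
    case: (A i :&: W0 =P set0) => [h0|h0] /=.
      case cY: (c0 \in Y) => //; rewrite lt0b; apply/set0Pn; exists c0.
      by move: hc0; rewrite !inE cY => /andP[-> _]; rewrite orbT.
    rewrite mul0n addn0 lt0b; apply/set0Pn.
    move/eqP/set0Pn: h0 => [e he]; exists e; move: he; rewrite !inE => /andP[-> ->].
    by [].
  rewrite muln0 addn0; case: (boolP (A i :&: W0 != set0)) => //= h0.
  rewrite lt0b; apply/set0Pn; move/set0Pn: h0 => [e he]; exists e.
  by move: he; rewrite !inE => /andP[-> ->].
Qed.

End Sets.

Lemma ratio_ge (R : rcfType) (a b : nat) (x : R) :
  (x <= 1)%R -> (x * b%:R <= a%:R)%R -> (x <= Defs.ratio R a b)%R.
Proof.
rewrite /Defs.ratio; case: eqP => [_ //|/eqP b0] _ h.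
by rewrite ler_pdivlMr // ltr0n lt0n.
Qed.

Lemma nat_sqrt m : exists r, (r * r <= m < r.+1 * r.+1)%N.
Proof.
have ex0 : exists r, (r * r <= m)%N by exists 0%N.
have ub : forall r, (r * r <= m)%N -> (r <= m)%N by move=> r h; nia.
case: (ex_maxnP ex0 ub) => r hr hmax; exists r; rewrite hr /=.
rewrite ltnNge; apply/negP => h; have := hmax _ h; lia.
Qed.

Lemma cov_le_n (C : finType) n (A : 'I_n -> {set C}) W : (cov A W <= n)%N.
Proof. by rewrite /cov; apply: leq_trans (max_card _) _; rewrite card_ord. Qed.

Local Open Scope ring_scope.

Theorem theorem7 (R : rcfType) (C : finType) (n : nat) (A : 'I_n -> {set C}) (k : nat) :
  (0 < n)%N -> (1 <= k <= #|C|)%N ->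
  exists W : {set C},
    [/\ (#|W| <= k)%N,
        EJRplus A k W,
        repr_ratio R A k W >= 3%:R / 4%:R - 2%:R / Num.sqrt (k%:R) &
        util_ratio R A k W >= 2%:R / Num.sqrt (k%:R) - 1 / k%:R].
Proof.
move=> n0 /andP[k1 kC].
have [T [hTk htop hT3 hT4]] := exists_T A k.
have [W0 [TW0 hInv hdone]] := final_exists R A k T n0.
have hsz := W0_size n0 hTk htop hT3 hT4 hInv.
have hcv := W0_cov n0 hTk htop hT3 hT4 hInv.
set q := Num.sqrt (k%:R : R).
have kR : (1 : R) <= k%:R by rewrite ler1n.
have k0R : (0 : R) < k%:R by lra.
have q0 : 0 < q by rewrite sqrtr_gt0; lra.
have qk : q * q = k%:R by rewrite -expr2 sqr_sqrtr //; lra.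
have q1 : 1 <= q by nra.
have nR : (0 : R) < n%:R by rewrite ltr0n.
have rhoE : 2%:R / q - 1 / k%:R = (2 * q - 1) / k%:R.
  by rewrite -qk; field; rewrite gt_eqF.
have rho1 : 2%:R / q - 1 / k%:R <= 1.
  by rewrite rhoE ler_pdivrMr // mul1r; nra.
have beta1 : 3%:R / 4%:R - 2%:R / q <= 1 :> R.
  have : 0 <= 2%:R / q :> R by rewrite divr_ge0 // ltW.
  lra.
have ejr : forall W : {set C}, W0 \subset W -> EJRplus A k W.
  by move=> W h; apply: done0_EJR n0 _; exact: done_mono h hdone.
have mcn : (max_cov A k <= n)%N by apply/bigmax_leqP => W' _; exact: cov_le_n.
case: (lerP (3%:R / 4%:R - 2%:R / q) (#|W0|%:R / k%:R)) => hcase.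
- have [W [W0W hWk hfill]] := fill_exists A kC hsz.
  exists W; split.
  + by rewrite hWk.
  + exact: ejr.
  + rewrite /repr_ratio; apply: ratio_ge => //.
    have hcW := cov_mono A W0W.
    case: (lerP (3%:R / 4%:R - 2%:R / q) 0) => hb.
      by apply: le_trans (_ : 0 <= _); [rewrite mulr_le0_ge0 | exact: ler0n].
    apply: le_trans (_ : (3%:R / 4%:R - 2%:R / q) * n%:R <= _).
      by apply: ler_wpM2l; [exact: ltW | rewrite ler_nat].
    apply: le_trans (_ : #|W0|%:R / k%:R * n%:R <= _).
      by apply: ler_wpM2r => //; exact: ler0n.
    apply: le_trans (_ : (cov A W0)%:R <= _); last by rewrite ler_nat.
    rewrite mulrAC ler_pdivrMr // -!natrM ler_nat; exact: hcv.
  + rewrite /util_ratio; apply: ratio_ge => //.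
    exact: (util_main n0 hTk htop hT3 hT4 hInv W0W hWk hfill k1).
have b0 : 0 < 3%:R / 4%:R - 2%:R / q :> R.
  apply: le_lt_trans hcase; apply: divr_ge0; [exact: ler0n | exact: ltW].
have q83 : 8%:R / 3%:R < q :> R.
  move: b0; rewrite subr_gt0 ltr_pdivrMr // => h.
  rewrite ltr_pdivrMr ?ltr0n //; lra.
have [r /andP[hr1 hr2]] := nat_sqrt (4 * k).
have rR1 : r%:R <= 2 * q :> R.
  have : (r * r)%:R <= (4 * k)%:R :> R by rewrite ler_nat.
  rewrite !natrM -qk => h.
  have r0 : (0 : R) <= r%:R by exact: ler0n.
  nra.
have rR2 : 2 * q < r%:R + 1 :> R.
  have : (4 * k)%:R < (r.+1 * r.+1)%:R :> R by rewrite ltr_nat.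
  rewrite !natrM -qk -natr1 => h.
  have r0 : (0 : R) <= r%:R by exact: ler0n.
  nra.
have hW0k : #|W0|%:R < (3%:R / 4%:R - 2%:R / q) * k%:R :> R.
  by rewrite -ltr_pdivrMr.
have hbk : (3%:R / 4%:R - 2%:R / q) * k%:R = 3%:R / 4%:R * k%:R - 2 * q :> R.
  by rewrite mulrBl -qk; field; rewrite gt_eqF.
have rk : (#|W0| + r <= k)%N.
  rewrite -(ler_nat R) natrD; lra.
have [qq hsum] : exists qq, (#|W0| + r + qq = k)%N.
  by exists (k - (#|W0| + r))%N; exact: subnKC rk.
have rk' : (r <= k)%N by apply: leq_trans rk; exact: leq_addl.
have [U [hU hUsw]] := top_r A kC rk'.
have [Wc [f [hWc hmc hcn hcY]]] := cov_fill A kC W0.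
have qqk : (qq <= k)%N by rewrite -hsum; exact: leq_addl.
have [Y [hY1 hY2 hY3]] := avg_subset f hWc qqk.
exists ((W0 :|: Y) :|: U); split.
- apply: leq_trans (leq_card_setU _ _) _; rewrite hU.
  apply: leq_trans (leq_add (leq_card_setU _ _) (leqnn r)) _.
  by rewrite hY2 -hsum addnAC.
- apply: ejr; apply: subset_trans (subsetUl _ Y) (subsetUl _ U).
- rewrite /repr_ratio; apply: ratio_ge => //.
  have hc1 := cov_mono A (subsetUl (W0 :|: Y) U).
  have hc2 := hcY Y hY1.
  apply: le_trans (_ : ((cov A W0 + \sum_(c in Y) f c)%N)%:R <= _); last first.
    by rewrite ler_nat; apply: leq_trans hc2 hc1.
  rewrite natrD.
  apply: (@real_rep R k%:R n%:R _ (\sum_(c in Wc) f c)%:R _ _ #|W0|%:R r%:R qq%:R q) => //.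
  + by rewrite -!natrD hsum.
  + by rewrite -!natrM ler_nat.
  + by rewrite -natrD ler_nat.
  + by rewrite -!natrM ler_nat.
  + by rewrite -natrD ler_nat.
- rewrite /util_ratio; apply: ratio_ge => //.
  have hsU := sw_mono A (subsetUr (W0 :|: Y) U).
  apply: le_trans (_ : (sw A U)%:R <= _); last by rewrite ler_nat.
  rewrite rhoE.
  have : (r * max_sw A k)%:R <= (k * sw A U)%:R :> R by rewrite ler_nat.
  rewrite !natrM => h.
  have m0 : (0 : R) <= (max_sw A k)%:R by exact: ler0n.
  rewrite mulrAC ler_pdivrMr // mulrC.
  nra.
Qed.
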